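(* Let $\mathcal{L}\in\mathrm{Mat}_d(\mathbb{Z})$ be invertible over $\mathbb{Q}$. Let $G=\mathbb{Z}^d/\mathcal{L}^2\mathbb{Z}^d$ (a finite abelian group), let $H$ be its subgroup $\mathcal{L}\mathbb{Z}^d/\mathcal{L}^2\mathbb{Z}^d$, and note that $\mathcal{L}$ induces a homomorphism $G\to G$, also denoted $\mathcal{L}$. Let $X\subseteq G$ with $0\in X$. Then at least one of the following holds: (1) $X+H$ does not generate $G$; (2) $X+\mathcal{L} X\supsetneq X$; (3) $H\subseteq X$.
   Context: Note $X+\mathcal{L}X\supseteq X$ always holds since $0\in X$. *)

(* Defs.v *)
From HB Require Import structures.
From mathcomp Require Import all_boot all_order all_algebra.
Set Implicit Arguments. Unset Strict Implicit. Unset Printing Implicit Defensive.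
Import Order.TTheory GRing.Theory Num.Theory.
Local Open Scope ring_scope.

(* Subsets of the
   quotient G = Z^d / L^2 Z^d are represented by their preimages in Z^d,
   i.e. subsets of Z^d invariant under translation by L^2 Z^d. *)

Definition lat (d : nat) (M : 'M[int]_d) (v : 'cV[int]_d) : Prop :=
  exists w : 'cV[int]_d, v = M *m w.

Definition sumset (d : nat) (A B : 'cV[int]_d -> Prop) (v : 'cV[int]_d) : Prop :=
  exists a b, A a /\ B b /\ v = a + b.

Definition matimage (d : nat) (M : 'M[int]_d) (A : 'cV[int]_d -> Prop)
  (v : 'cV[int]_d) : Prop := exists a, A a /\ v = M *m a.

Inductive gen (d : nat) (S : 'cV[int]_d -> Prop) : 'cV[int]_d -> Prop :=
  | gen_in : forall v, S v -> gen S v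
  | gen_0 : gen S 0
  | gen_sub : forall u v, gen S u -> gen S v -> gen S (u - v).

(* A is a union of cosets of L^2 Z^d, i.e. the preimage of a subset of G *)
Definition L2periodic (d : nat) (L : 'M[int]_d) (A : 'cV[int]_d -> Prop) : Prop :=
  forall x w, A x -> A (x + (L *m L) *m w).

(* Main.v *)
Require Import Defs.
From HB Require Import structures.
From mathcomp Require Import all_boot all_order all_algebra.
From Stdlib Require Import Classical.
Import Order.TTheory GRing.Theory Num.Theory.
Local Open Scope ring_scope.

Lemma detL_neq0 d (L : 'M[int]_d) :
  map_mx (fun z : int => (z%:~R : rat)) L \in unitmx -> \det L != 0.
Proof.
rewrite unitmxE unitfE.
have -> : \det (map_mx (fun z : int => (z%:~R : rat)) L) = (\det L)%:~R.
  by rewrite -det_map_mx.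
by apply: contra => /eqP ->.
Qed.

Lemma LLw d (L : 'M[int]_d) (u : 'cV[int]_d) :
  (L *m L) *m (\adj L *m (\det L *: u)) = (L *m u) *+ (absz (\det L * \det L)).
Proof.
rewrite -mulmxA (mulmxA L (\adj L)) mul_mx_adj mul_scalar_mx.
rewrite -!scalemxAr scalerA.
set m := absz _.
have -> : (\det L * \det L) = m%:~R.
  by rewrite intz gez0_abs // -expr2 sqr_ge0.
by rewrite scaler_int.
Qed.

Theorem lemma3p2 (d : nat) (L : 'M[int]_d) (X : 'cV[int]_d -> Prop) :
  map_mx (fun z : int => (z%:~R : rat)) L \in unitmx ->
  L2periodic L X ->
  X 0 ->
  (* (1) X + H does not generate G *)
  (~ (forall v, gen (sumset X (lat L)) v))
  \/ (* (2) X + L X strictly contains X *)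
  ((forall v, X v -> sumset X (matimage L X) v) /\
   (exists v, sumset X (matimage L X) v /\ ~ X v))
  \/ (* (3) H is contained in X *)
  (forall v, lat L v -> X v).
Proof.
move=> hU hP hX0.
have hD := @detL_neq0 d L hU.
destruct (classic (exists x y, X x /\ X y /\ ~ X (x + L *m y))) as [[x [y [hx [hy hn]]]]|hC].
  right; left; split.
    move=> v hv; exists v, 0; split=> //; split; last by rewrite addr0.
    by exists 0; split=> //; rewrite mulmx0.
  exists (x + L *m y); split=> //.
  by exists x, (L *m y); split=> //; split=> //; exists y.
have C : forall x y, X x -> X y -> X (x + L *m y).
  move=> x y hx hy; apply: NNPP => hn; apply: hC; by exists x, y.
destruct (classic (forall v, gen (sumset X (lat L)) v)) as [hG|hG]; last by left.
right; right.
pose P u := forall x, X x -> X (x + L *m u).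
have iter : forall u, P u -> forall k x, X x -> X (x + (L *m u) *+ k).
  move=> u hu; elim=> [|k IH] x hx; first by rewrite mulr0n addr0.
  by rewrite mulrSr addrA; apply: hu; apply: IH.
have neg : forall u, P u -> P (- u).
  move=> u hu x hx.
  set m := (absz (\det L * \det L)).
  have m0 : (0 < m)%N.
    by rewrite absz_gt0 mulf_neq0.
  have := hP _ (- (\adj L *m (\det L *: u))) (iter u hu m.-1 x hx).
  rewrite mulmxN LLw -/m.
  have -> : (L *m u) *+ m = (L *m u) *+ m.-1 + L *m u.
    by rewrite -mulrSr prednK.
  by rewrite opprD addrA addrK mulmxN.
have key : forall u, gen (sumset X (lat L)) u -> P u.
  move=> u; elim=> [v [a [b [ha [[w ->] ->]]]]| |u1 v1 _ h1 _ h2].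
  - move=> x hx; rewrite mulmxDr addrA mulmxA.
    by apply: hP; apply: C.
  - by move=> x hx; rewrite mulmx0 addr0.
  - move=> x hx; rewrite mulmxDr addrA.
    have := neg _ h2 (x + L *m u1) (h1 x hx).
    by [].
move=> v [w ->].
by have := key w (hG w) 0 hX0; rewrite add0r.
Qed.
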